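(* Let $d\ge 3$ be odd. Then $G_d$ is spherically transitive and fractal.
   Context: Let $d\ge 3$, $X=\{1,\dots,d\}$, $T$ the $d$-regular rooted tree with vertex set $X^*$. $\mathrm{Aut}(T)$ is the group of root-preserving automorphisms with product left-to-right: $(gh)(u)=h(g(u))$. Sections $g|_u$ are defined by $g(uv)=g(u)\,g|_u(v)$; we write $g=(g|_1,\dots,g|_d)\lambda_g$ with $\lambda_g\in S_d$ the action on the first level; $e$ is the identity; $\overline{j}\in\{1,\dots,d\}$ denotes $j$ mod $d$. $G_d=\langle a_1,\dots,a_d\rangle\le\mathrm{Aut}(T)$ where $a_i$ acts on the first level as $(i\ \overline{i+1})$, with $a_i|_i=a_i$, $a_i|_{\overline{i+1}}=a_{\overline{i+1}}$, and $a_i|_x=e$ otherwise. $G_d$ is self-similar (closed under sections). A subgroup $G\le\mathrm{Aut}(T)$ is spherically transitive if it acts transitively on $X^k$ for every $k$. For $u\in X^*$, $\mathrm{St}_G(u)$ is the stabilizer of $u$ and $\pi_u:\mathrm{St}_G(u)\to G$, $\pi_u(g)=g|_u$. A self-similar $G$ is fractal if $\pi_u(\mathrm{St}_G(u))=G$ for every vertex $u$. *)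

(* Defs.v *)
From mathcomp Require Import all_boot.
Set Implicit Arguments. Unset Strict Implicit. Unset Printing Implicit Defensive.

(* Alphabet X = {1,...,d} is modelled by 'I_d = {0,...,d-1}; letter k+1 of the
   paper is the ordinal k, and  \overline{j+1}  is  ordS j  (successor mod d).
   Vertices of the d-regular rooted tree T are words  seq 'I_d ;
   tree automorphisms are modelled as functions  seq 'I_d -> seq 'I_d
   (compared extensionally). *)

Definition vertex (d : nat) := seq 'I_d.
Definition treefun (d : nat) := vertex d -> vertex d.

(* Action of the generator a_i:  a_i = (a_i|_1,...,a_i|_d) (i i+1)  with
   a_i|_i = a_i, a_i|_{i+1} = a_{i+1}, other sections trivial. *)
Fixpoint act_a (d : nat) (i : 'I_d) (w : vertex d) {struct w} : vertex d :=
  match w with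
  | [::] => [::]
  | x :: v =>
      if x == i then ordS i :: act_a i v
      else if x == ordS i then i :: act_a (ordS i) v
      else x :: v
  end.

Fixpoint act_ainv (d : nat) (i : 'I_d) (w : vertex d) {struct w} : vertex d :=
  match w with
  | [::] => [::]
  | y :: v =>
      if y == ordS i then i :: act_ainv i v
      else if y == i then ordS i :: act_ainv (ordS i) v
      else y :: v
  end.

Definition gen (d : nat) (s : 'I_d * bool) : treefun d :=
  if s.2 then act_ainv s.1 else act_a s.1.

(* Evaluation of a word s_1 s_2 ... s_n with the left-to-right convention
   (gh)(u) = h(g(u)): s_1 acts first. *)
Definition eval_word (d : nat) (w : seq ('I_d * bool)) : treefun d :=
  foldl (fun f s => gen s \o f) id w.

Definition in_Gd (d : nat) (g : treefun d) : Prop :=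
  exists w : seq ('I_d * bool), g =1 eval_word w.

(* Section g|_u defined by g(uv) = g(u) g|_u(v). *)
Definition section (d : nat) (g : treefun d) (u : vertex d) : treefun d :=
  fun v => drop (size u) (g (u ++ v)).

Definition spherically_transitive (d : nat) (G : treefun d -> Prop) : Prop :=
  forall u v : vertex d, size u = size v -> exists g, G g /\ g u = v.

(* Fractal: pi_u(St_G(u)) = G for every vertex u. *)
Definition fractal (d : nat) (G : treefun d -> Prop) : Prop :=
  forall u : vertex d,
    (forall g, G g -> g u = u -> G (section g u)) /\
    (forall h, G h -> exists g, G g /\ g u = u /\ section g u =1 h).

(* Main.v *)
Require Import Defs.
From mathcomp Require Import all_boot.
From mathcomp Require Import zify.
Set Implicit Arguments. Unset Strict Implicit. Unset Printing Implicit Defensive.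

Section S.
Variable d : nat.
Implicit Types (g h : treefun d) (x y i : 'I_d) (s : 'I_d * bool) (w : seq ('I_d * bool)).
Local Notation G := (@in_Gd d).

Lemma foldl_comp (w : seq ('I_d * bool)) (f : treefun d) v :
  foldl (fun f s => gen s \o f) f w v = eval_word w (f v).
Proof.
elim: w f v => [|s w IH] f v //=.
rewrite IH /eval_word /=; by rewrite IH.
Qed.

Lemma eval_cons s w v : eval_word (s :: w) v = eval_word w (gen s v).
Proof. by rewrite /eval_word /= foldl_comp. Qed.

Lemma eval_cat w1 w2 v : eval_word (w1 ++ w2) v = eval_word w2 (eval_word w1 v).
Proof. by rewrite /eval_word foldl_cat foldl_comp. Qed.

Lemma G_ext g h : G g -> h =1 g -> G h.
Proof. by move=> [w Hw] E; exists w => v; rewrite E Hw. Qed.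

Lemma G_id : G id.
Proof. by exists [::]. Qed.

Lemma G_comp g h : G g -> G h -> G (h \o g).
Proof.
move=> [w1 H1] [w2 H2]; exists (w1 ++ w2) => v.
by rewrite eval_cat /= H1 H2.
Qed.

Lemma G_gen s : G (gen s).
Proof. by exists [:: s] => v; rewrite eval_cons. Qed.

Hypothesis d2 : 1 < d.

Lemma ordS_neq i : (ordS i == i) = false.
Proof.
apply/negbTE/eqP => /(congr1 val) /=.
have hi := ltn_ord i; case: (ltnP i.+1 d) => h.
  by rewrite modn_small //; lia.
have e : i.+1 = d by lia.
rewrite e modnn; lia.
Qed.

Lemma ainv_a i (u : vertex d) : act_ainv i (act_a i u) = u.
Proof.
elim: u i => [|y u IH] i //=.
case: eqP => [->|ne].
  by rewrite /= eqxx IH.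
case: eqP => [->|ne2] /=.
  by rewrite eq_sym ordS_neq eqxx IH.
by move/eqP/negbTE: ne => ->; move/eqP/negbTE: ne2 => ->.
Qed.

Lemma a_ainv i (u : vertex d) : act_a i (act_ainv i u) = u.
Proof.
elim: u i => [|y u IH] i //=.
case: eqP => [->|ne].
  by rewrite /= eqxx IH.
case: eqP => [->|ne2] /=.
  by rewrite ordS_neq eqxx IH.
by move/eqP/negbTE: ne => ->; move/eqP/negbTE: ne2 => ->.
Qed.

Lemma gen_inv s v : gen (s.1, ~~ s.2) (gen s v) = v.
Proof. by case: s => i [] /=; rewrite /gen /= ?ainv_a ?a_ainv. Qed.

Lemma gen_nil s : gen s [::] = [::].
Proof. by case: s => i []. Qed.

Lemma G_nil g : G g -> g [::] = [::].
Proof.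
move=> [w ->]; elim: w => [|s w IH] //.
by rewrite eval_cons gen_nil.
Qed.

Lemma gen_struct s x : exists y (k : treefun d), G k /\ forall v, gen s (x::v) = y :: k v.
Proof.
case: s => i [] /=; rewrite /gen /=.
- case: eqP => [_|_].
    by exists i, (act_ainv i); split=> //; exact: (G_gen (i, true)).
  case: eqP => [_|_].
    by exists (ordS i), (act_ainv (ordS i)); split=> //; exact: (G_gen (ordS i, true)).
  by exists x, id; split=> //; exact: G_id.
- case: eqP => [_|_].
    by exists (ordS i), (act_a i); split=> //; exact: (G_gen (i, false)).
  case: eqP => [_|_].
    by exists i, (act_a (ordS i)); split=> //; exact: (G_gen (ordS i, false)).
  by exists x, id; split=> //; exact: G_id.
Qed.

Lemma G_struct g x : G g -> exists y (k : treefun d), G k /\ forall v, g (x::v) = y :: k v.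
Proof.
move=> [w Hw].
suff : exists y (k : treefun d), G k /\ forall v, eval_word w (x::v) = y :: k v.
  by move=> [y [k [Gk Hk]]]; exists y, k; split=> // v; rewrite Hw.
elim: w {g Hw} x => [|s w IH] x.
  by exists x, id; split=> //; exact: G_id.
have [y [k [Gk Hk]]] := gen_struct s x.
have [z [k' [Gk' Hk']]] := IH y.
exists z, (k' \o k); split; first exact: G_comp.
by move=> v; rewrite eval_cons Hk Hk'.
Qed.

Lemma G_inv g : G g -> exists g', G g' /\ (forall v, g' (g v) = v) /\ (forall v, g (g' v) = v).
Proof.
move=> [w Hw].
suff : exists g', G g' /\ (forall v, g' (eval_word w v) = v) /\ (forall v, eval_word w (g' v) = v).
  by move=> [g' [G' [H1 H2]]]; exists g'; split=> //; split=> v; rewrite Hw.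
elim: w {g Hw} => [|s w [e' [Ge [H1 H2]]]].
  by exists id; split=> //; exact: G_id.
exists (gen (s.1, ~~ s.2) \o e'); split; first by apply: G_comp => //; exact: G_gen.
split=> v /=; rewrite ?eval_cons ?H1 ?gen_inv //.
have -> : gen s (gen (s.1, ~~ s.2) (e' v)) = e' v.
  by case: s => i b; rewrite -[in RHS](gen_inv (i, ~~ b) (e' v)) /= negbK.
by rewrite H2.
Qed.

Definition T x h := exists g, G g /\ forall v, g (x::v) = x :: h v.

Lemma T_ext x h h' : T x h -> h' =1 h -> T x h'.
Proof. by move=> [g [Gg H]] E; exists g; split=> // v; rewrite H E. Qed.

Lemma T_id x : T x id.
Proof. by exists id; split=> //; exact: G_id. Qed.

Lemma T_comp x f h : T x f -> T x h -> T x (f \o h).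
Proof.
move=> [gf [Gf Hf]] [gh [Gh Hh]]; exists (gf \o gh); split; first exact: G_comp.
by move=> v /=; rewrite Hh Hf.
Qed.

Lemma T_inv x h : T x h -> exists h', T x h' /\ (forall v, h' (h v) = v) /\ (forall v, h (h' v) = v).
Proof.
move=> [g [Gg Hg]].
have [g' [G' [H1 H2]]] := G_inv Gg.
have [z [k [Gk Hk]]] := G_struct x G'.
have E v : g' (x :: h v) = x :: v by rewrite -Hg H1.
have zx : z = x by have := E [::]; rewrite Hk => -[].
subst z.
exists k; split; first by exists g'.
split=> v.
  by have := E v; rewrite Hk => -[].
by have := H2 (x :: v); rewrite Hk Hg => -[].
Qed.

Lemma T_conj x y g (sc : treefun d) t r : G g -> (forall v, g (x::v) = y :: sc v) ->
  G t -> (forall v, t (y::v) = y :: r v) -> T x sc -> T x (r \o sc).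
Proof.
move=> Gg Hg Gt Ht Ts.
have [g' [G' [H1 H2]]] := G_inv Gg.
have [z [s' [Gs' Hs']]] := G_struct y G'.
have E v : g' (y :: sc v) = x :: v by rewrite -Hg H1.
have zx : z = x by have := E [::]; rewrite Hs' => -[].
subst z.
have ss' (u : vertex d) : sc (s' u) = u by have := H2 (y :: u); rewrite Hs' Hg => -[].
have T1 : T x (s' \o r \o sc).
  exists (g' \o t \o g); split; first by apply: G_comp => //; exact: G_comp.
  by move=> v /=; rewrite Hg Ht Hs'.
apply: T_ext (T_comp Ts T1) _ => v /=; by rewrite ss'.
Qed.

Lemma a_fix i v : act_a i (i :: v) = ordS i :: act_a i v.
Proof. by rewrite /= eqxx. Qed.

Lemma a_back i v : act_a i (ordS i :: v) = i :: act_a (ordS i) v.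
Proof. by rewrite /= ordS_neq eqxx. Qed.

Section Core.
Variable x : 'I_d.
Hypothesis hodd : odd d.

Definition nx k := iter k (@ordS d) x.

Fixpoint pp k : treefun d :=
  match k with 0 => id | k'.+1 => act_a (nx k') \o pp k' end.

Lemma val_nx k : val (nx k) = (x + k) %% d.
Proof.
elim: k => [|k IH]; first by rewrite addn0 modn_small.
by rewrite /nx iterS /= -/(nx k) IH -addn1 modnDml addn1 addnS.
Qed.

Lemma nx_d : nx d = x.
Proof. by apply: val_inj; rewrite val_nx modnDr modn_small. Qed.

Lemma nx_surj j : exists k, nx k = j.
Proof.
exists (j + (d - x)); apply: val_inj; rewrite val_nx.
have hx := ltn_ord x; have hj := ltn_ord j.
have -> : x + (j + (d - x)) = j + d by lia.
by rewrite modnDr modn_small.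
Qed.

Lemma pp_act k v : pp k (x :: v) = nx k :: pp k v.
Proof. by elim: k v => [|k IH] v //=; rewrite IH a_fix. Qed.

Lemma G_pp k : G (pp k).
Proof. elim: k => [|k IH] /=; [exact: G_id | apply: G_comp => //; exact: (G_gen (_, false))]. Qed.

Lemma Gaa i : G (act_a i \o act_a i).
Proof. by apply: G_comp; exact: (G_gen (i, false)). Qed.

Lemma aa_act i v : (act_a i \o act_a i) (i :: v) = i :: (act_a (ordS i) \o act_a i) v.
Proof. by rewrite /comp a_fix a_back. Qed.

Lemma T_step k : T x (pp k) -> T x (pp k.+2).
Proof.
move=> Tk.
by apply: T_ext (T_conj (G_pp k) (pp_act k) (Gaa (nx k)) (aa_act (nx k)) Tk) _.
Qed.

Lemma T_even m : T x (pp m.*2).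
Proof. elim: m => [|m IH]; [exact: T_id | rewrite doubleS; exact: T_step]. Qed.

Lemma T_all_a j : T x (act_a j).
Proof.
have d0 : 0 < d by lia.
set z := nx d.-1.
have nxP n : 0 < n -> nx n = ordS (nx n.-1) by case: n.
have oz : ordS z = x by rewrite /z -(nxP d d0) nx_d.
have Td : T x (pp d) by exists (pp d); split; [exact: G_pp | move=> v; rewrite pp_act nx_d].
have Tp : T x (pp d.-1).
  have -> : d.-1 = (d.-1)./2.*2.
    have he : odd d.-1 = false.
      by have := hodd; rewrite -(prednK d0) /= => /negbTE.
    by rewrite -[LHS](odd_double_half d.-1) he.
  exact: T_even.
have [h' [Th' [_ H2]]] := T_inv Tp.
have Tz : T x (act_a z).
  apply: T_ext (T_comp Td Th') _ => v /=.
  by rewrite -[in pp d _](prednK d0) /= H2.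
have Tx : T x (act_a x).
  have T1 : T x (act_a z \o act_a x).
    exists (act_a z \o act_a z); split; first exact: Gaa.
    by move=> v; rewrite /comp -{1}oz a_back a_fix oz.
  have [k' [Tk' [K1 _]]] := T_inv Tz.
  by apply: T_ext (T_comp Tk' T1) _ => v /=; rewrite K1.
suff H : forall k, T x (act_a (nx k)) /\ T x (pp k).
  by have [k <-] := nx_surj j; case: (H k).
elim=> [|k [Ta Tpk]]; first by split; [exact: Tx | exact: T_id].
have Tpk1 : T x (pp k.+1) by exact: T_comp.
split=> //.
have T2 := T_conj (G_pp k) (pp_act k) (Gaa (nx k)) (aa_act (nx k)) Tpk.
have [h2 [Th2 [_ H3]]] := T_inv Tpk1.
apply: T_ext (T_comp T2 Th2) _ => v.
by have := H3 v; rewrite /comp /= => ->.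
Qed.
End Core.

Lemma T_G x h : odd d -> G h -> T x h.
Proof.
move=> hodd [w Hw]; apply: T_ext _ Hw.
elim: w => [|s w IH]; first exact: T_id.
have Ts : T x (gen s).
  case: s => i [] /=; rewrite /gen /=; last exact: T_all_a.
  have [h' [Th' [H1 _]]] := T_inv (T_all_a x hodd i).
  apply: T_ext Th' _ => v; by rewrite -[in RHS](a_ainv i v) H1.
by apply: T_ext (T_comp IH Ts) _ => v; rewrite eval_cons.
Qed.

Lemma lift (u : vertex d) h : odd d -> G h -> exists g, G g /\ forall v, g (u ++ v) = u ++ h v.
Proof.
move=> hodd Gh; elim: u => [|y u [g1 [G1 H1]]]; first by exists h.
have [g [Gg Hg]] := T_G y hodd G1.
by exists g; split=> // v; rewrite cat_cons Hg H1.
Qed.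

Lemma G_split g (u : vertex d) : G g -> size (g u) = size u /\ exists h, G h /\ forall v, g (u ++ v) = g u ++ h v.
Proof.
elim: u g => [|y u IH] g Gg.
  by rewrite (G_nil Gg); split=> //; exists g.
have [z [k [Gk Hk]]] := G_struct y Gg.
have [S1 [h [Gh Hh]]] := IH k Gk.
split; first by rewrite Hk /= S1.
by exists h; split=> // v; rewrite cat_cons Hk Hh Hk.
Qed.

End S.

Theorem theorem4p6 (d : nat) (hd : 3 <= d) (hodd : odd d) :
  spherically_transitive (@in_Gd d) /\ fractal (@in_Gd d).
Proof.
have d2 : 1 < d by apply: leq_trans hd.
split.
  move=> u0 v0 E0.
  suff H : forall n (u v : vertex d), size u = n -> size v = n -> exists g, in_Gd g /\ g u = v.
    exact: H E0 erefl.
  elim=> [|n IH] [|x u] [|y v] //= Su Sv.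
    by exists id; split=> //; exact: G_id.
  have [k [g0 G0]] : exists k g0, in_Gd g0 /\ g0 (x :: u) = y :: k.
    have [m <-] := nx_surj d2 x hodd y.
    exists (pp x m u), (pp x m); split; [exact: G_pp | exact: pp_act].
  case: G0 => G0 H0.
  have [Sk _] := G_split (x :: u) G0.
  rewrite H0 /= in Sk.
  have [h [Gh Hh]] : exists h, in_Gd h /\ h k = v.
    apply: IH; [case: Su => <-; by case: Sk | by case: Sv].
  have [g1 [G1 H1]] := T_G d2 y hodd Gh.
  exists (g1 \o g0); split; first exact: G_comp.
  by rewrite /= H0 H1 Hh.
move=> u; split.
  move=> g Gg _.
  have [Su [h [Gh Hh]]] := G_split u Gg.
  apply: G_ext Gh _ => v; by rewrite /section Hh -Su drop_size_cat.
move=> h Gh.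
have [g [Gg Hg]] := lift d2 u hodd Gh.
exists g; split=> //; split.
  by have := Hg [::]; rewrite cats0 (G_nil Gh) cats0.
by move=> v; rewrite /section Hg drop_size_cat.
Qed.
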